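(* Let $X,Y\in\mathcal{H}$ be random variables, $\mathbb{E}$ a sub-linear expectation and $(\mathbb{V},v)$ the pair of capacities generated by $\mathbb{E}$. If $X$ is independent of $Y$ under $\mathbb{E}$, then for all Borel sets $D,G\subset\mathbb{R}$, $$\mathbb{V}(X\in D,Y\in G)=\mathbb{V}(X\in D)\,\mathbb{V}(Y\in G)\quad\text{and}\quad v(X\in D,Y\in G)=v(X\in D)\,v(Y\in G),$$ i.e. $X$ is pairwise independent of $Y$ under both $\mathbb{V}$ and $v$.
   Context: Let $(\Omega,\mathcal{F})$ be a measurable space, $\mathcal{P}$ a nonempty set of probability measures on it, and $\mathcal{H}$ a set of real random variables on $(\Omega,\mathcal{F})$ containing indicator-type functions of the random variables considered. The sub-linear expectation is $\mathbb{E}[\xi]:=\sup_{P\in\mathcal{P}}E_P[\xi]$; it generates the capacities $\mathbb{V}(A):=\mathbb{E}[I_A]=\sup_{P\in\mathcal{P}}P(A)$ and $v(A):=-\mathbb{E}[-I_A]=\inf_{P\in\mathcal{P}}P(A)$. Independence (Peng): $X$ is independent of $Y$ under $\mathbb{E}$ if for every measurable $\varphi$ on $\mathbb{R}^2$ (with relevant quantities in $\mathcal{H}$), $\mathbb{E}[\varphi(Y,X)]=\mathbb{E}[\overline{\varphi}(Y)]$ with $\overline{\varphi}(y):=\mathbb{E}[\varphi(y,X)]$. *)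

(* Defs.v *)
From HB Require Import structures.
From mathcomp Require Import all_boot all_order all_algebra.
From mathcomp Require Import all_classical all_reals all_analysis.
Set Implicit Arguments. Unset Strict Implicit. Unset Printing Implicit Defensive.
Import Order.TTheory GRing.Theory Num.Theory.
Local Open Scope classical_set_scope.
Local Open Scope ring_scope.
Local Open Scope ereal_scope.

Definition sublinE (d : measure_display) (T : measurableType d) (R : realType)
  (Ps : set (probability T R)) (xi : T -> R) : \bar R :=
  ereal_sup [set (\int[P]_w (xi w)%:E) | P in Ps].

Definition Vcap (d : measure_display) (T : measurableType d) (R : realType)
  (Ps : set (probability T R)) (A : set T) : \bar R :=
  sublinE Ps (\1_A).

Definition vcap (d : measure_display) (T : measurableType d) (R : realType)
  (Ps : set (probability T R)) (A : set T) : \bar R :=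
  - sublinE Ps (fun w => - \1_A w)%R.

Definition indep_sublin (d : measure_display) (T : measurableType d)
  (R : realType) (Ps : set (probability T R)) (H : set (T -> R))
  (X Y : T -> R) : Prop :=
  forall phi : (R * R)%type -> R,
    measurable_fun setT phi ->
    H (fun w => phi (Y w, X w)) ->
    (forall y : R, H (fun w => phi (y, X w))) ->
    H (fun w => fine (sublinE Ps (fun w' => phi (Y w, X w')))) ->
    sublinE Ps (fun w => phi (Y w, X w)) =
    sublinE Ps (fun w => fine (sublinE Ps (fun w' => phi (Y w, X w')))).

(* Main.v *)
Require Import Defs.
From HB Require Import structures.
From mathcomp Require Import all_boot all_order all_algebra.
From mathcomp Require Import all_classical all_reals all_analysis.
Import Order.TTheory GRing.Theory Num.Theory.
Local Open Scope classical_set_scope.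
Local Open Scope ring_scope.
Local Open Scope ereal_scope.

Section aux.
Context (d : measure_display) (T : measurableType d) (R : realType)
  (Ps : set (probability T R)).

Definition Sk (k : R) (A : set T) : \bar R :=
  ereal_sup [set k%:E * P A | P in Ps].

Lemma int_indic (P : probability T R) (A : set T) (k : R) : measurable A ->
  \int[P]_w (k * \1_A w)%:E = k%:E * P A.
Proof.
move=> mA.
under eq_integral do rewrite EFinM.
rewrite integralZl //; last exact: integrable_indic.
by rewrite integral_indic // setIT.
Qed.

Lemma sE_indic (A : set T) (k : R) : measurable A ->
  sublinE Ps (fun w => k * \1_A w)%R = Sk k A.
Proof.
move=> mA; rewrite /sublinE /Sk; congr ereal_sup.
by apply: eq_imagel => P _; rewrite int_indic.
Qed.

Lemma Sk_scale (A : set T) (c k : R) : Ps !=set0 -> (0 <= c)%R ->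
  Sk (c * k) A = c%:E * Sk k A.
Proof.
move=> [P0 HP0] c0; rewrite /Sk -ereal_supZl //; last first.
  by apply/set0P; exists (k%:E * P0 A); exists P0.
congr ereal_sup; rewrite image_comp; apply: eq_imagel => P _ /=.
by rewrite EFinM muleA.
Qed.

Lemma Sk_fin (A : set T) (k : R) : measurable A -> Ps !=set0 -> Sk k A \is a fin_num.
Proof.
move=> mA [P0 HP0]; rewrite fin_numElt; apply/andP; split.
  apply: (@lt_le_trans _ _ (k%:E * P0 A)).
    by rewrite -(fineK (fin_num_measure P0 A mA)) -EFinM ltNyr.
  by apply: le_ereal_sup_tmp; exists (k%:E * P0 A) => //; exists P0.
apply: (@le_lt_trans _ _ (`|k|)%:E); last exact: ltry.
apply: ge_ereal_sup => _ [P _ <-].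
rewrite -(fineK (fin_num_measure P A mA)) -EFinM lee_fin.
rewrite (le_trans (ler_norm _)) // normrM ler_piMr //.
have h0 : (0 <= P A)%E by [].
have h1 : (P A <= 1)%E by apply: probability_le1.
rewrite ger0_norm; first by rewrite -lee_fin fineK ?fin_num_measure.
by rewrite -lee_fin fineK ?fin_num_measure.
Qed.

End aux.
Arguments Sk {d T R} Ps k A.
Arguments sE_indic {d T R Ps} A k.
Arguments Sk_scale {d T R Ps} A c k.
Arguments Sk_fin {d T R Ps} A k.

Lemma indic_pre (T : Type) (R : realType) (f : T -> R) (D : set R) w :
  \1_(f @^-1` D) w = \1_D (f w) :> R.
Proof. by rewrite !indicE. Qed.

Lemma indic_bnd (R : realType) (G D : set R) (k x y : R) :
  (`| k * (\1_G x * \1_D y)| <= `|k|)%R.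
Proof.
rewrite !indicE; case: (x \in G); case: (y \in D) => /=.
all: by rewrite ?mulr1 ?mulr0 ?mul0r ?normr0 ?normr_ge0.
Qed.

Lemma meas_phi (R : realType) (G D : set R) (k : R) (f g : (R * R)%type -> R) :
  measurable G -> measurable D ->
  measurable_fun setT f -> measurable_fun setT g ->
  measurable_fun setT (fun z => k * (\1_G (f z) * \1_D (g z)))%R.
Proof.
move=> mG mD mf mg.
apply: measurable_realfun.measurable_funM; first exact: measurable_cst.
apply: measurable_realfun.measurable_funM.
  apply: measurableT_comp mf; exact: measurable_realfun.measurable_indic.
apply: measurableT_comp mg; exact: measurable_realfun.measurable_indic.
Qed.

Lemma key (d : measure_display) (T : measurableType d) (R : realType)
  (Ps : set (probability T R)) (H : set (T -> R)) (X Y : T -> R)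
  (D G : set R) (k : R) :
  Ps !=set0 ->
  measurable_fun setT X -> measurable_fun setT Y ->
  (forall psi : (R * R)%type -> R, measurable_fun setT psi ->
     (exists M : R, forall z, (`|psi z| <= M)%R) ->
     H (fun w => psi (X w, Y w))) ->
  indep_sublin Ps H X Y ->
  measurable D -> measurable G ->
  (k * k = 1)%R ->
  (0 <= k * fine (Sk Ps k (X @^-1` D)))%R ->
  Sk Ps k (X @^-1` D `&` Y @^-1` G) =
    (k * fine (Sk Ps k (X @^-1` D)))%:E * Sk Ps k (Y @^-1` G).
Proof.
move=> Pn0 mX mY hH ind mD mG kk ka.
have mA : measurable (X @^-1` D) by rewrite -[X @^-1` D]setTI; exact: mX.
have mB : measurable (Y @^-1` G) by rewrite -[Y @^-1` G]setTI; exact: mY.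
set a := fine (Sk Ps k (X @^-1` D)).
have aE : Sk Ps k (X @^-1` D) = a%:E by rewrite fineK //; exact: Sk_fin.
pose phi := fun z : (R * R)%type => (k * (\1_G z.1 * \1_D z.2))%R.
have inner : forall w, fine (sublinE Ps (fun w' => phi (Y w, X w'))) =
    (\1_G (Y w) * a)%R.
  move=> w.
  have -> : (fun w' => phi (Y w, X w')) =
      (fun w' => (\1_G (Y w) * k) * \1_(X @^-1` D) w')%R.
    by apply: funext => w'; rewrite /phi /= indic_pre mulrCA mulrA.
  rewrite sE_indic // Sk_scale // ?aE //=.
have h1 : measurable_fun setT phi.
  by apply: meas_phi.
have h2 : H (fun w => phi (Y w, X w)).
  apply: (hH (fun z : (R * R)%type => k * (\1_G z.2 * \1_D z.1))%R); first by apply: meas_phi.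
  by exists `|k|%R => z; exact: indic_bnd.
have h3 : forall y, H (fun w => phi (y, X w)).
  move=> y.
  apply: (hH (fun z : (R * R)%type => k * (\1_G y * \1_D z.1))%R); first by apply: meas_phi.
  by exists `|k|%R => z; exact: indic_bnd.
have h4 : H (fun w => fine (sublinE Ps (fun w' => phi (Y w, X w')))).
  rewrite (funext inner).
  have -> : (fun w => \1_G (Y w) * a)%R =
      (fun w => a * (\1_G (Y w) * \1_G (Y w)))%R.
    apply: funext => w /=; rewrite mulrC; congr (_ * _)%R.
    by rewrite !indicE; case: (_ \in _); rewrite ?mulr1 ?mulr0.
  apply: (hH (fun z : (R * R)%type => a * (\1_G z.2 * \1_G z.2))%R); first by apply: meas_phi.
  by exists `|a|%R => z; exact: indic_bnd.
have := ind phi h1 h2 h3 h4.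
rewrite (funext inner).
have -> : (fun w => phi (Y w, X w)) =
    (fun w => k * \1_(X @^-1` D `&` Y @^-1` G) w)%R.
  by apply: funext => w; rewrite /phi /= indicI /= !indic_pre (mulrC (\1_G _)); congr (_ * _)%R.
rewrite sE_indic //; last exact: measurableI.
have -> : (fun w => \1_G (Y w) * a)%R =
    (fun w => ((k * a) * k) * \1_(Y @^-1` G) w)%R.
  apply: funext => w; rewrite indic_pre mulrC; congr (_ * _)%R.
  by rewrite mulrC mulrA kk mul1r.
rewrite sE_indic // Sk_scale //.
Qed.

Lemma VcapE (d : measure_display) (T : measurableType d) (R : realType)
  (Ps : set (probability T R)) (A : set T) : measurable A ->
  Vcap Ps A = Sk Ps 1 A.
Proof.
move=> mA; rewrite /Vcap -sE_indic //; congr sublinE.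
by apply: funext => w; rewrite mul1r.
Qed.

Lemma vcapE (d : measure_display) (T : measurableType d) (R : realType)
  (Ps : set (probability T R)) (A : set T) : measurable A ->
  vcap Ps A = - Sk Ps (-1) A.
Proof.
move=> mA; rewrite /vcap -sE_indic //; congr (- sublinE _ _).
by apply: funext => w; rewrite mulN1r.
Qed.

Theorem lemma1 (d : measure_display) (T : measurableType d) (R : realType)
  (Ps : set (probability T R)) (H : set (T -> R)) (X Y : T -> R) :
  Ps !=set0 ->
  measurable_fun setT X -> measurable_fun setT Y ->
  H X -> H Y ->
  (* H contains the bounded Borel ("indicator-type") functions of (X, Y) *)
  (forall psi : (R * R)%type -> R, measurable_fun setT psi ->
     (exists M : R, forall z, (`|psi z| <= M)%R) ->
     H (fun w => psi (X w, Y w))) ->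
  indep_sublin Ps H X Y ->
  forall D G : set R, measurable D -> measurable G ->
    Vcap Ps (X @^-1` D `&` Y @^-1` G) = Vcap Ps (X @^-1` D) * Vcap Ps (Y @^-1` G)
    /\ vcap Ps (X @^-1` D `&` Y @^-1` G) = vcap Ps (X @^-1` D) * vcap Ps (Y @^-1` G).
Proof.
move=> Pn0 mX mY _ _ hH ind D G mD mG.
have mA : measurable (X @^-1` D) by rewrite -[X @^-1` D]setTI; exact: mX.
have mB : measurable (Y @^-1` G) by rewrite -[Y @^-1` G]setTI; exact: mY.
have mAB := measurableI _ _ mA mB.
have [P0 HP0] := Pn0.
split.
- rewrite !VcapE //.
  have f1 := Sk_fin (X @^-1` D) 1 mA Pn0.
  rewrite (@key _ _ _ Ps H X Y D G 1 Pn0 mX mY hH ind mD mG) ?mul1r ?fineK //.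
  apply: fine_ge0; apply: le_ereal_sup_tmp; exists (1%:E * P0 (X @^-1` D)).
    by exists P0.
  by rewrite mul1e.
- rewrite !vcapE //.
  have f1 := Sk_fin (X @^-1` D) (-1) mA Pn0.
  rewrite (@key _ _ _ Ps H X Y D G (-1) Pn0 mX mY hH ind mD mG) ?mulrNN ?mul1r //; last first.
    rewrite mulN1r oppr_ge0; apply: fine_le0.
    by apply: ge_ereal_sup => _ [P _ <-]; rewrite mulN1e oppe_le0.
  by rewrite mulN1r EFinN -(fineK f1) muleN mulNe oppeK.
Qed.
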